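(* Let $P(q)=\sum_{j=0}^{n} q^{j}a_{j}$ be a slice regular polynomial of degree $n$ with all coefficients $a_j\in\mathbb H$. Assume that for some $I\in\mathbb S$, the restriction $P_I$ of $P$ to $\mathbb C_I$ has no zero in the open unit disk $\mathbb B_I=\{q\in\mathbb C_I:|q|<1\}$, and $P_I(\mathbb C_I)\subset\mathbb C_I$. Then $$\|P'\|\leq\frac{n}{2}\|P\|,$$ where $P'(q)=\sum_{j=1}^n q^{j-1}ja_j$ and $\|F\|=\max_{|q|\le1}|F(q)|$.
   Context: $\mathbb H$ denotes the quaternions with modulus $|q|=\sqrt{q\bar q}$; $\mathbb S=\{q\in\mathbb H:q^2=-1\}$; for $I\in\mathbb S$, $\mathbb C_I=\mathbb R\oplus I\mathbb R$ (a copy of $\mathbb C$). A slice regular polynomial of degree $n$ is a function $q\mapsto\sum_{j=0}^n q^ja_j$ with coefficients on the right and $a_n\neq0$. *)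

(* Defs.v *)
From HB Require Import structures.
From mathcomp Require Import all_boot all_order all_algebra.
From mathcomp Require Import classical_sets reals.
Set Implicit Arguments. Unset Strict Implicit. Unset Printing Implicit Defensive.
Import Order.TTheory GRing.Theory Num.Theory.
Local Open Scope ring_scope.
Local Open Scope classical_set_scope.

Record quat (R : realType) := Quat { qre : R; qi : R; qj : R; qk : R }.

Section Quat.
Variable R : realType.
Implicit Types p q : quat R.

Definition qreal (r : R) : quat R := Quat r 0 0 0.
Definition qzero : quat R := qreal 0.
Definition qone : quat R := qreal 1.
Definition qadd p q : quat R :=
  Quat (qre p + qre q) (qi p + qi q) (qj p + qj q) (qk p + qk q).
Definition qmul p q : quat R :=
  Quat (qre p * qre q - qi p * qi q - qj p * qj q - qk p * qk q)
       (qre p * qi q + qi p * qre q + qj p * qk q - qk p * qj q)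
       (qre p * qj q - qi p * qk q + qj p * qre q + qk p * qi q)
       (qre p * qk q + qi p * qj q - qj p * qi q + qk p * qre q).
Definition qnorm q : R :=
  Num.sqrt (qre q ^+ 2 + qi q ^+ 2 + qj q ^+ 2 + qk q ^+ 2).
Fixpoint qpow q (n : nat) : quat R :=
  match n with 0 => qone | m.+1 => qmul (qpow q m) q end.
Definition qsum (n : nat) (F : nat -> quat R) : quat R :=
  foldr (fun j acc => qadd (F j) acc) qzero (iota 0 n).

Definition in_sphereS (I : quat R) : Prop := qmul I I = qreal (-1).
Definition sliceC (I : quat R) (x y : R) : quat R := qadd (qreal x) (qmul I (qreal y)).

Definition spoly (n : nat) (a : nat -> quat R) (q : quat R) : quat R :=
  qsum n.+1 (fun j => qmul (qpow q j) (a j)).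
Definition spoly_deriv (n : nat) (a : nat -> quat R) (q : quat R) : quat R :=
  qsum n (fun j => qmul (qpow q j) (qmul (qreal (j.+1)%:R) (a j.+1))).

(* ||F|| = max_{|q| <= 1} |F(q)| (written as a supremum; the max is attained) *)
Definition qsupnorm (F : quat R -> quat R) : R :=
  sup [set qnorm (F q) | q in [set q | qnorm q <= 1]].
End Quat.

(* Main.v *)
Require Import Defs.
From mathcomp Require Import all_boot all_order all_algebra.
From mathcomp Require Import classical_sets reals.
From mathcomp.real_closed Require Import complex.
From mathcomp Require cyclic cyclotomic.
From mathcomp Require Import ring lra.
Import Order.TTheory GRing.Theory Num.Theory.
Local Open Scope ring_scope.
Local Open Scope complex_scope.
Local Open Scope classical_set_scope.
Set Implicit Arguments. Unset Strict Implicit. Unset Printing Implicit Defensive.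

Section Main.
Variable R : realType.
Local Notation C := (R[i]).


Lemma prim_exists (N : nat) : (0 < N)%N -> exists w : C, N.-primitive_root w.
Proof.
pose p : {poly C} := 'X^N - 1; have [r Dp] := closed_field_poly_normal p.
move=> n_gt0; rewrite (monicP _) ?monicXnsubC // scale1r in Dp.
have rn1: all N.-unity_root r by apply/allP=> z; rewrite -root_prod_XsubC -Dp.
have sz_r: (N < (size r).+1)%N.
  by rewrite -(size_prod_XsubC r id) -Dp size_XnsubC.
have [|z] := hasP (cyclic.has_prim_root n_gt0 rn1 _ sz_r); last by exists z.
by rewrite -separable.separable_prod_XsubC -Dp cyclotomic.separable_Xn_sub_1 // pnatr_eq0 -lt0n.
Qed.

Definition nC (z : C) : R := complex.Re `|z|.

Lemma normCE (z : C) : `|z| = (nC z)%:C.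
Proof. by rewrite /nC normc_def. Qed.

Lemma nCE a b : nC (a +i* b) = Num.sqrt (a ^+ 2 + b ^+ 2).
Proof. by rewrite /nC normc_def. Qed.

Lemma nC_ge0 z : 0 <= nC z.
Proof. by case: z => a b; rewrite nCE sqrtr_ge0. Qed.

Lemma nCM x y : nC (x * y) = nC x * nC y.
Proof. by apply: complexI; rewrite -normCE normrM !normCE rmorphM. Qed.

Lemma lerC (a b : R) : (a%:C <= b%:C :> C) = (a <= b).
Proof. exact: lecR. Qed.

Lemma nCD x y : nC (x + y) <= nC x + nC y.
Proof. have := ler_normD x y. rewrite !normCE -rmorphD lerC. done. Qed.

Lemma nC_le x y : (`|x| <= `|y|) = (nC x <= nC y).
Proof. by rewrite !normCE lerC. Qed.

Lemma nC_lt x y : (`|x| < `|y|) = (nC x < nC y).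
Proof. by rewrite !normCE ltcR. Qed.

Lemma nC_eq0 x : (nC x == 0) = (x == 0).
Proof. rewrite -[x == 0]normr_eq0 normCE; apply/eqP/eqP => [->|/complexI] //. Qed.

Lemma nCN x : nC (- x) = nC x.
Proof. by rewrite /nC normrN. Qed.

Lemma nCreal (a : R) : nC a%:C = `|a|.
Proof. by rewrite nCE expr0n /= addr0 sqrtr_sqr. Qed.

Lemma nCnat k : nC (k%:R : C) = k%:R.
Proof. by rewrite -(rmorph_nat (real_complex R)) nCreal ger0_norm ?ler0n. Qed.

Lemma nCX x k : nC (x ^+ k) = nC x ^+ k.
Proof. by elim: k => [|k IH]; rewrite ?expr0 ?nCreal ?normr1 // !exprS nCM IH. Qed.




Lemma mulcE (a b c d : R) : (a +i* b) * (c +i* d) = (a * c - b * d) +i* (a * d + b * c) :> C.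
Proof. by []. Qed.
Lemma addcE (a b c d : R) : (a +i* b) + (c +i* d) = (a + c) +i* (b + d) :> C.
Proof. by []. Qed.
Lemma oppcE (a b : R) : - (a +i* b) = (- a) +i* (- b) :> C.
Proof. by []. Qed.

Lemma nC2 (a b : R) : nC (a +i* b) ^+ 2 = a ^+ 2 + b ^+ 2.
Proof. by rewrite nCE sqr_sqrtr // addr_ge0 // sqr_ge0. Qed.

Lemma nC_le2 (z w : C) : (nC z <= nC w) = (nC z ^+ 2 <= nC w ^+ 2).
Proof. by rewrite ler_sqr // nnegrE nC_ge0. Qed.
Lemma nC_lt2 (z w : C) : (nC z < nC w) = (nC z ^+ 2 < nC w ^+ 2).
Proof. by rewrite ltr_sqr // nnegrE nC_ge0. Qed.

Lemma Re_frac_le (z w : C) : z != w -> nC z <= nC w -> complex.Re (z / (z - w)) <= 1 / 2.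
Proof.
move=> zw; rewrite nC_le2.
have nz : z - w != 0 by rewrite subr_eq0.
have := mulfVK nz z; move: (z / (z - w)) => t.
case: t => x y; case: z zw nz => a b; case: w => c d zw nz.
rewrite !nC2 /= => /eqP; rewrite eq_complex /= => /andP[/eqP E1 /eqP E2] H.
have Dpos : 0 < (a - c) ^+ 2 + (b - d) ^+ 2.
  move: nz; rewrite /= eq_complex /= negb_and => /orP[] h.
    have : 0 < (a - c) ^+ 2 by rewrite exprn_even_gt0.
    have := sqr_ge0 (b - d); lra.
  have : 0 < (b - d) ^+ 2 by rewrite exprn_even_gt0.
  have := sqr_ge0 (a - c); lra.
have Ex : x * ((a - c) ^+ 2 + (b - d) ^+ 2) - (a * (a - c) + b * (b - d)) = 0.
  transitivity ((a-c)*((x*(a-c) - y*(b-d)) - a) + (b-d)*((x*(b-d)+y*(a-c)) - b)); first ring.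
  by rewrite E1 E2 !subrr !mulr0 addr0.
nra.
Qed.

Lemma Re_frac_lt (z w : C) : z != w -> nC z < nC w -> complex.Re (z / (z - w)) < 1 / 2.
Proof.
move=> zw; rewrite nC_lt2.
have nz : z - w != 0 by rewrite subr_eq0.
have := mulfVK nz z; move: (z / (z - w)) => t.
case: t => x y; case: z zw nz => a b; case: w => c d zw nz.
rewrite !nC2 /= => /eqP; rewrite eq_complex /= => /andP[/eqP E1 /eqP E2] H.
have Dpos : 0 < (a - c) ^+ 2 + (b - d) ^+ 2.
  move: nz; rewrite /= eq_complex /= negb_and => /orP[] h.
    have : 0 < (a - c) ^+ 2 by rewrite exprn_even_gt0.
    have := sqr_ge0 (b - d); lra.
  have : 0 < (b - d) ^+ 2 by rewrite exprn_even_gt0.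
  have := sqr_ge0 (a - c); lra.
have Ex : x * ((a - c) ^+ 2 + (b - d) ^+ 2) - (a * (a - c) + b * (b - d)) = 0.
  transitivity ((a-c)*((x*(a-c) - y*(b-d)) - a) + (b-d)*((x*(b-d)+y*(a-c)) - b)); first ring.
  by rewrite E1 E2 !subrr !mulr0 addr0.
nra.
Qed.


Lemma natCE k : (k%:R : C) = (k%:R) +i* 0.
Proof. by rewrite -[RHS]/((k%:R : R)%:C) rmorph_nat. Qed.

Lemma half_le (S : C) (k : nat) : complex.Re S <= k%:R / 2 -> nC S <= nC (k%:R - S).
Proof.
case: S => a b /= H; rewrite natCE oppcE addcE nC_le2 !nC2. have := ler0n R k. nra.
Qed.

Lemma half_lt (S : C) (k : nat) : (0 < k)%N -> complex.Re S < k%:R / 2 -> nC S < nC (k%:R - S).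
Proof.
move=> k0; case: S => a b /= H; rewrite natCE oppcE addcE nC_lt2 !nC2.
have : (0 : R) < k%:R by rewrite ltr0n. nra.
Qed.



Lemma logder (s : seq C) (z : C) :
  (\prod_(w <- s) ('X - w%:P)).[z] != 0 ->
  z * (\prod_(w <- s) ('X - w%:P))^`().[z] =
  (\prod_(w <- s) ('X - w%:P)).[z] * \sum_(w <- s) z / (z - w).
Proof.
elim: s => [|w s IH]; first by rewrite !big_nil -[1]/(1%:P) derivC !hornerE.
move=> H; rewrite !big_cons in H *; rewrite derivM derivXsubC !hornerE; move: H; rewrite !hornerE mulf_eq0 negb_or => /andP[h1 h2].
rewrite mulrDr mulrA [z * (z - w)]mulrC -mulrA IH //.
by field.
Qed.

Lemma ReD (x y : C) : complex.Re (x + y) = complex.Re x + complex.Re y.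
Proof. by case: x; case: y. Qed.

Lemma Re_sum_le (s : seq C) (z : C) :
  (forall w, w \in s -> z != w /\ nC z <= nC w) ->
  complex.Re (\sum_(w <- s) z / (z - w)) <= (size s)%:R / 2.
Proof.
elim: s => [|w s IH] H; first by rewrite big_nil /= mul0r.
rewrite big_cons ReD /= -addn1 natrD mulrDl.
have [h1 h2] := H w (mem_head _ _).
have := Re_frac_le h1 h2.
have := IH (fun w' hw => H w' (@mem_behead _ (w :: s) _ hw)).
lra.
Qed.

Lemma Re_sum_lt (s : seq C) (z : C) : (0 < size s)%N ->
  (forall w, w \in s -> z != w /\ nC z < nC w) ->
  complex.Re (\sum_(w <- s) z / (z - w)) < (size s)%:R / 2.
Proof.
elim: s => [|w s IH] //= _ H.
rewrite big_cons ReD /= -addn1 natrD mulrDl.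
have [h1 h2] := H w (mem_head _ _).
have := Re_frac_lt h1 h2.
case: s IH H => [|w' s] IH H.
  by rewrite big_nil /= mul0r; lra.
have := IH isT (fun w'' hw => H w'' (@mem_behead _ (w :: w' :: s) _ hw)).
lra.
Qed.



Lemma deriv_decomp (F : {poly C}) (z : C) : F != 0 -> F.[z] != 0 ->
  exists r : seq C, [/\ (size F).-1 = size r,
    (forall w, w \in r -> root F w) &
    z * F^`().[z] = F.[z] * \sum_(w <- r) z / (z - w)].
Proof.
move=> F0 Fz; have [r Dr] := closed_field_poly_normal F.
have c0 : lead_coef F != 0 by rewrite lead_coef_eq0.
exists r; split.
- by rewrite {1}Dr size_scale // size_prod_XsubC.
- by move=> w wr; rewrite Dr rootZ // root_prod_XsubC.
have Gz : (\prod_(w <- r) ('X - w%:P)).[z] != 0.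
  by move: Fz; rewrite {1}Dr hornerZ mulf_eq0 negb_or => /andP[].
rewrite {1}Dr derivZ hornerZ mulrCA logder // {2}Dr hornerZ; ring.
Qed.

Lemma deriv_bound (F : {poly C}) (z : C) : F != 0 -> F.[z] != 0 ->
  (forall w, root F w -> nC z <= nC w) ->
  nC (z * F^`().[z]) <= nC (((size F).-1)%:R * F.[z] - z * F^`().[z]).
Proof.
move=> F0 Fz Hr; have [r [sz rr ->]] := deriv_decomp F0 Fz.
have H : forall w, w \in r -> z != w /\ nC z <= nC w.
  move=> w wr; split; last exact/Hr/rr.
  by apply: contraNneq Fz => ->; exact: rr.
have := half_le (Re_sum_le H) => h; rewrite sz.
have -> : ((size r)%:R : C) * F.[z] - F.[z] * \sum_(w <- r) z / (z - w) = F.[z] * (((size r)%:R : C) - \sum_(w <- r) z / (z - w)) by ring.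
by rewrite !nCM ler_wpM2l ?nC_ge0.
Qed.

Lemma deriv_bound_lt (F : {poly C}) (z : C) : F != 0 -> F.[z] != 0 ->
  (1 < size F)%N ->
  (forall w, root F w -> nC z < nC w) ->
  nC (z * F^`().[z]) < nC (((size F).-1)%:R * F.[z] - z * F^`().[z]).
Proof.
move=> F0 Fz sF Hr; have [r [sz rr ->]] := deriv_decomp F0 Fz.
have H : forall w, w \in r -> z != w /\ nC z < nC w.
  move=> w wr; split; last exact/Hr/rr.
  by apply: contraNneq Fz => ->; exact: rr.
have s0 : (0 < size r)%N by rewrite -sz -ltnS prednK // ltnW.
have := half_lt s0 (Re_sum_lt s0 H) => h; rewrite sz.
have -> : ((size r)%:R : C) * F.[z] - F.[z] * \sum_(w <- r) z / (z - w) = F.[z] * (((size r)%:R : C) - \sum_(w <- r) z / (z - w)) by ring.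
by rewrite !nCM ltr_pM2l // lt_neqAle nC_ge0 andbT eq_sym nC_eq0.
Qed.




Lemma sum_root_pow (N i : nat) (w : C) : N.-primitive_root w -> (0 < i < N)%N ->
  \sum_(k < N) (w ^+ i) ^+ k = 0.
Proof.
move=> pw /andP[i0 iN].
have wi1 : w ^+ i - 1 != 0.
  rewrite subr_eq0 -(prim_order_dvd pw); apply/negP => /dvdn_leq.
  by move=> /(_ i0); rewrite leqNgt iN.
have : (w ^+ i - 1) * \sum_(k < N) (w ^+ i) ^+ k = 0.
  by rewrite -subrX1 exprAC (prim_expr_order pw) expr1n subrr.
by move/eqP; rewrite mulf_eq0 (negbTE wi1) /= => /eqP.
Qed.

Lemma mean_value (N : nat) (w : C) (f : {poly C}) (z0 h : C) :
  N.-primitive_root w -> (size f <= N)%N ->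
  \sum_(k < N) f.[z0 + h * w ^+ k] = N%:R * f.[z0].
Proof.
move=> pw sf; have N0 := prim_order_gt0 pw.
pose g := f \Po ('X + z0%:P).
have gE : forall x, g.[x] = f.[x + z0] by move=> x; rewrite horner_comp !hornerE.
have sg : (size g <= N)%N by rewrite size_comp_poly2 ?size_XaddC.
transitivity (\sum_(k < N) g.[h * w ^+ k]).
  by apply: eq_bigr => k _; rewrite gE addrC.
under eq_bigr do rewrite (horner_coef_wide _ sg).
rewrite exchange_big /=.
transitivity (\sum_(i < N) g`_i * h ^+ i * \sum_(k < N) (w ^+ i) ^+ k).
  apply: eq_bigr => i _; rewrite mulr_sumr; apply: eq_bigr => k _.
  by rewrite exprMn -mulrA -exprM mulnC exprM.
rewrite (bigD1 (Ordinal N0)) //= [X in _ + X]big1 ?addr0.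
  rewrite expr0 mulr1 -[z0]add0r -gE horner_coef0.
  under eq_bigr do rewrite expr0 expr1n.
  by rewrite sumr_const card_ord mulrC -mulr_natl.
move=> i /eqP ni; rewrite sum_root_pow ?mulr0 // ltn_ord andbT lt0n.
by apply/eqP => i0; apply: ni; apply: val_inj.
Qed.



Lemma nC0 : nC (0 : C) = 0.
Proof. by apply/eqP; rewrite nC_eq0. Qed.

Lemma nC_sum (I : Type) (r : seq I) (F : I -> C) :
  nC (\sum_(i <- r) F i) <= \sum_(i <- r) nC (F i).
Proof.
elim: r => [|x r IH]; first by rewrite !big_nil nC0.
rewrite !big_cons. have := nCD (F x) (\sum_(j <- r) F j). lra.
Qed.

Lemma poly_bound (f : {poly C}) z : nC z <= 1 ->
  nC f.[z] <= \sum_(i < size f) nC f`_i.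
Proof.
move=> z1; rewrite horner_coef; apply: le_trans (nC_sum _ _) _.
apply: ler_sum => i _; rewrite nCM nCX.
by rewrite ler_piMr ?nC_ge0 // exprn_ile1 ?nC_ge0.
Qed.

Lemma nC1 : nC (1 : C) = 1.
Proof. by rewrite -[1 : C]/(1%:C) nCreal normr1. Qed.

Lemma max_mod (f : {poly C}) (K : R) :
  (forall z, nC z = 1 -> nC f.[z] <= K) -> forall z, nC z <= 1 -> nC f.[z] <= K.
Proof.
move=> HK.
pose E := [set nC f.[z] | z in [set z : C | nC z <= 1]].
have hasE : has_sup E.
  split; first by exists (nC f.[0]); exists 0 => //=; rewrite nC0.
  exists (\sum_(i < size f) nC f`_i) => _ [z /= z1 <-]; exact: poly_bound.
have Tub : forall z, nC z <= 1 -> nC f.[z] <= sup E.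
  by move=> z z1; apply: sup_upper_bound => //; exists z.
suff TK : sup E <= K by move=> z z1; apply: le_trans (Tub z z1) TK.
pose N := (size f).+1.
have [w pw] := prim_exists (ltn0Sn (size f)).
have nw : nC w = 1.
  apply/eqP; rewrite -(pexpr_eq1 (ltn0Sn (size f))) ?nC_ge0 // -nCX.
  by rewrite (prim_expr_order pw) nC1.
have N0 : (0 : R) < N%:R by rewrite ltr0n.
apply/ler_addgt0Pr => e e0.
have [_ [z0 /= z01 <-] He] := sup_adherent (divr_gt0 e0 N0) hasE.
have [z0e|z0lt] := eqVneq (nC z0) 1.
  have := HK z0 z0e.
  have : e / N%:R <= e.
    rewrite ler_pdivrMr //; have : (1:R) <= N%:R by rewrite ler1n.
    nra.
  lra.
have z0lt1 : nC z0 < 1 by rewrite lt_neqAle z0lt z01.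
pose u : C := if z0 == 0 then 1 else z0 / `|z0|.
have nu : nC u = 1.
  rewrite /u; case: eqP => [_|/eqP z0n]; first exact: nC1.
  rewrite nCM normCE -fmorphV nCreal.
  by rewrite ger0_norm ?invr_ge0 ?nC_ge0 // mulfV // nC_eq0.
have z0u : z0 = (nC z0)%:C * u.
  rewrite /u; case: eqP => [->|/eqP z0n]; first by rewrite nC0 mul0r.
  by rewrite -normCE mulrC divfK // normr_eq0.
pose h := (1 - nC z0)%:C * u.
have MV := mean_value z0 h pw (leqnSn _).
rewrite big_ord_recl /= expr0 mulr1 in MV.
have E1 : z0 + h = u.
  by rewrite /h {1}z0u -mulrDl -rmorphD addrC subrK mul1r.
rewrite E1 in MV.
have Hpts : forall k : 'I_(size f), nC f.[z0 + h * w ^+ (bump 0 k)] <= sup E.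
  move=> k; apply: Tub; apply: le_trans (nCD _ _) _.
  rewrite !nCM nCX nw expr1n mulr1 nu mulr1 nCreal ger0_norm; last by lra.
  lra.
have S1 : nC (\sum_(i < size f) f.[z0 + h * w ^+ (bump 0 i)]) <= (size f)%:R * sup E.
  apply: le_trans (nC_sum _ _) _.
  have := @ler_sum _ _ (index_enum 'I_(size f)) xpredT _ (fun _ => sup E) (fun k _ => Hpts k).
  by rewrite sumr_const card_ord mulr_natl.
have Hu := HK u nu.
have : nC (N%:R * f.[z0]) <= K + (size f)%:R * sup E.
  by rewrite -MV; apply: le_trans (nCD _ _) _; exact: lerD.
rewrite nCM nCnat.
move: He; rewrite /N -addn1 natrD => He H2.
have s1 : (0:R) < (size f)%:R + 1 by rewrite ltr_wpDl ?ler0n.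
have H3 : ((size f)%:R + 1) * (sup E - e / ((size f)%:R + 1)) < ((size f)%:R + 1) * nC f.[z0].
  by rewrite ltr_pM2l.
have H4 : ((size f)%:R + 1) * (e / ((size f)%:R + 1)) = e.
  by rewrite mulrC divfK // lt0r_neq0.
lra.
Qed.



Lemma polar (z : C) : exists u : C, nC u = 1 /\ z = (nC z)%:C * u.
Proof.
have [->|z0] := eqVneq z 0; first by exists 1; rewrite nC1 nC0 mul0r.
exists (z / `|z|); split.
  rewrite nCM normCE -fmorphV nCreal.
  by rewrite ger0_norm ?invr_ge0 ?nC_ge0 // mulfV // nC_eq0.
by rewrite -normCE mulrC divfK // normr_eq0.
Qed.

Lemma lax (p : {poly C}) (n : nat) (M : R) : size p = n.+1 ->
  (forall z, nC z < 1 -> p.[z] != 0) ->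
  (forall z, nC z <= 1 -> nC p.[z] <= M) ->
  forall z, nC z <= 1 -> nC (p^`()).[z] <= n%:R / 2 * M.
Proof.
move=> sp Hz HM; apply: max_mod => zt zt1.
have p0 : p != 0 by rewrite -size_poly_eq0 sp.
have Mpos : 0 < M.
  have h0 := HM 0; rewrite nC0 ler01 in h0; have := h0 isT.
  have : 0 < nC p.[0] by rewrite lt_neqAle nC_ge0 andbT eq_sym nC_eq0 Hz // nC0 ltr01.
  lra.
case: n sp => [|n] sp.
  have : (size p^`() < 1)%N by rewrite -sp lt_size_deriv.
  rewrite ltnS leqn0 size_poly_eq0 => /eqP ->.
  by rewrite horner0 nC0 mul0r mul0r.
set A := (n.+1)%:R * p.[zt] - zt * p^`().[zt].
have e1 : nC (p^`()).[zt] = nC (zt * p^`().[zt]) by rewrite nCM zt1 mul1r.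
have S1 : nC (p^`()).[zt] <= nC A.
  rewrite e1; have [pz|pz] := eqVneq p.[zt] 0.
    by rewrite /A pz mulr0 sub0r nCN.
  have := deriv_bound p0 pz; rewrite sp /= => -> // w rw.
  rewrite zt1 leNgt; apply/negP => /Hz; by rewrite -/(root p w) rw.
have S2 : forall l : C, 1 < nC l ->
    nC (p^`()).[zt] < nC (A - (n.+1)%:R * l * M%:C).
  move=> l l1; rewrite e1.
  pose F := p - (l * M%:C)%:P.
  have dF : F^`() = p^`() by rewrite /F derivB derivC subr0.
  have sF : size F = n.+2.
    by rewrite /F size_polyDl ?size_polyN ?sp // ltnS (leq_trans (size_polyC_leq1 _)).
  have F0 : F != 0 by rewrite -size_poly_eq0 sF.
  have Fz : forall z, nC z <= 1 -> F.[z] != 0.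
    move=> z z1; rewrite /F !hornerE subr_eq0; apply/negP => /eqP E.
    have := HM z z1; rewrite E nCM nCreal (ger0_norm (ltW Mpos)).
    have : M < nC l * M by rewrite ltr_pMl.
    lra.
  have zt1' : nC zt <= 1 by rewrite zt1.
  have := @deriv_bound_lt F zt F0 (Fz zt zt1').
  rewrite sF /= dF => H.
  have Hr : forall w, root F w -> nC zt < nC w.
    move=> w rw; rewrite zt1 ltNge; apply/negP => /Fz; by rewrite -/(root F w) rw.
  have := H isT Hr.
  suff -> : (n.+1)%:R * F.[zt] - zt * p^`().[zt] = A - (n.+1)%:R * l * M%:C by [].
  rewrite /A /F !hornerE; ring.
have [u [nu Au]] := polar A.
have S3 : forall t, 1 < t ->
    nC (p^`()).[zt] < `|nC A - (n.+1)%:R * t * M|.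
  move=> t t1; have t0 : 0 <= t by apply: le_trans (ltW t1); exact: ler01.
  have := S2 (t%:C * u); rewrite nCM nu mulr1 nCreal (ger0_norm t0).
  move=> /(_ t1); rewrite {1}Au.
  have -> : (nC A)%:C * u - (n.+1)%:R * (t%:C * u) * M%:C
     = (nC A - (n.+1)%:R * t * M)%:C * u.
    by rewrite !rmorphB !rmorphM rmorph_nat; ring.
  by rewrite nCM nu mulr1 nCreal.
have nM : (0:R) < (n.+1)%:R * M by rewrite mulr_gt0 // ltr0n.
have S4 : nC A <= (n.+1)%:R * M.
  rewrite leNgt; apply/negP => HA.
  have t1 : 1 < nC A / ((n.+1)%:R * M) by rewrite ltr_pdivlMr // mul1r.
  have := S3 _ t1.
  have -> : (n.+1)%:R * (nC A / ((n.+1)%:R * M)) * M = nC A.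
    have hn : (0:R) < 1 + n%:R by have := ler0n R n; lra.
    by field; rewrite (lt0r_neq0 Mpos) (lt0r_neq0 hn).
  by rewrite /A subrr normr0 ltNge nC_ge0.
have S5 : nC (p^`()).[zt] + nC A <= (n.+1)%:R * M.
  apply/ler_addgt0Pr => e e0.
  have t1 : 1 < 1 + e / ((n.+1)%:R * M) by rewrite ltrDl divr_gt0.
  have := S3 _ t1.
  have -> : (n.+1)%:R * (1 + e / ((n.+1)%:R * M)) * M = (n.+1)%:R * M + e.
    have hn : (0:R) < 1 + n%:R by have := ler0n R n; lra.
    by field; rewrite (lt0r_neq0 Mpos) (lt0r_neq0 hn).
  rewrite ler0_norm; last by lra.
  lra.
lra.
Qed.

End Main.

Section Q.
Variable R : realType.
Local Notation C := (R[i]).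

Lemma sphere_I (I : quat R) : in_sphereS I ->
  qre I = 0 /\ qi I ^+ 2 + qj I ^+ 2 + qk I ^+ 2 = 1.
Proof.
case: I => a b c d; rewrite /in_sphereS /qmul /qreal /= => -[E0 E1 E2 E3].
have a0 : a = 0.
  have h : 2 * a ^+ 2 * (a ^+ 2 + 1) = 0.
    transitivity (2 * a ^+ 2 * (a * a - b * b - c * c - d * d + 1) + (a * b) * (a * b + b * a) + (a * c) * (a * c + c * a) + (a * d) * (a * d + d * a)); first ring.
    have e1 : a * b + b * a = 0 by rewrite -E1; ring.
    have e2 : a * c + c * a = 0 by rewrite -E2; ring.
    have e3 : a * d + d * a = 0 by rewrite -E3; ring.
    rewrite E0 e1 e2 e3; ring.
  move/eqP: h; rewrite !mulf_eq0 pnatr_eq0 /= => /orP[|]; first by rewrite orbb => /eqP.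
  by move/eqP; have := sqr_ge0 a; lra.
split => //; move: E0; rewrite a0; lra.
Qed.

Fixpoint scs (x y2 : R) (j : nat) : R * R :=
  if j is j'.+1 then ((scs x y2 j').1 * x - y2 * (scs x y2 j').2,
                     (scs x y2 j').1 + (scs x y2 j').2 * x)
  else (1, 0).

Lemma qpow_sc x q1 q2 q3 j :
  qpow (Quat x q1 q2 q3) j =
  Quat (scs x (q1 ^+ 2 + q2 ^+ 2 + q3 ^+ 2) j).1
       (q1 * (scs x (q1 ^+ 2 + q2 ^+ 2 + q3 ^+ 2) j).2)
       (q2 * (scs x (q1 ^+ 2 + q2 ^+ 2 + q3 ^+ 2) j).2)
       (q3 * (scs x (q1 ^+ 2 + q2 ^+ 2 + q3 ^+ 2) j).2).
Proof.
elim: j => [|j IH] /=; first by rewrite /qone /qreal !mulr0.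
rewrite IH /qmul /=; congr Quat; ring.
Qed.

Lemma cpow_sc (x Y y2 : R) j : Y ^+ 2 = y2 ->
  (x +i* Y) ^+ j = (scs x y2 j).1 +i* (Y * (scs x y2 j).2).
Proof.
move=> HY; elim: j => [|j IH] /=; first by rewrite expr0 mulr0.
rewrite exprSr IH mulcE -HY; congr Complex; ring.
Qed.


Definition Lq (I1 I2 I3 q1 q2 q3 A B Cc D : R) : quat R :=
  Quat (A - (q1 * I1 + q2 * I2 + q3 * I3) * D)
       (I1 * B + q1 * Cc + (q2 * I3 - q3 * I2) * D)
       (I2 * B + q2 * Cc + (q3 * I1 - q1 * I3) * D)
       (I3 * B + q3 * Cc + (q1 * I2 - q2 * I1) * D).

Lemma iota_sum (m : nat) (f : nat -> R) : \sum_(j <- iota 0 m) f j = \sum_(j < m) f j.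
Proof. by rewrite -(big_mkord xpredT) /index_iota subn0. Qed.

Definition sA x y2 (u : nat -> R) m := \sum_(j < m) (scs x y2 j).1 * u j.
Definition sC x y2 (u : nat -> R) m := \sum_(j < m) (scs x y2 j).2 * u j.

Lemma Qsum_E (I1 I2 I3 x q1 q2 q3 : R) (u v : nat -> R) m :
  qsum m (fun j => qmul (qpow (Quat x q1 q2 q3) j) (sliceC (Quat 0 I1 I2 I3) (u j) (v j))) =
  Lq I1 I2 I3 q1 q2 q3 (sA x (q1 ^+ 2 + q2 ^+ 2 + q3 ^+ 2) u m)
     (sA x (q1 ^+ 2 + q2 ^+ 2 + q3 ^+ 2) v m)
     (sC x (q1 ^+ 2 + q2 ^+ 2 + q3 ^+ 2) u m) (sC x (q1 ^+ 2 + q2 ^+ 2 + q3 ^+ 2) v m).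
Proof.
rewrite /sA /sC.
set y2 := q1 ^+ 2 + q2 ^+ 2 + q3 ^+ 2.
transitivity (Lq I1 I2 I3 q1 q2 q3 (\sum_(j <- iota 0 m) (scs x y2 j).1 * u j)
  (\sum_(j <- iota 0 m) (scs x y2 j).1 * v j) (\sum_(j <- iota 0 m) (scs x y2 j).2 * u j)
  (\sum_(j <- iota 0 m) (scs x y2 j).2 * v j)); last by congr Lq; exact: iota_sum.
rewrite /qsum.
elim: (iota 0 m) => [|j r IH] /=.
  by rewrite !big_nil /Lq /qzero /qreal; congr Quat; ring.
rewrite IH !big_cons qpow_sc /sliceC /qadd /qmul /qreal /Lq /=; congr Quat; ring.
Qed.

Lemma Lq_norm2 (I1 I2 I3 q1 q2 q3 A B Cc D : R) :
  I1 ^+ 2 + I2 ^+ 2 + I3 ^+ 2 = 1 ->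
  qnorm (Lq I1 I2 I3 q1 q2 q3 A B Cc D) ^+ 2 =
  A ^+ 2 + B ^+ 2 + (q1 ^+ 2 + q2 ^+ 2 + q3 ^+ 2) * (Cc ^+ 2 + D ^+ 2)
  + 2 * (q1 * I1 + q2 * I2 + q3 * I3) * (B * Cc - A * D).
Proof.
move=> HN; rewrite /qnorm sqr_sqrtr; last by rewrite !addr_ge0 ?sqr_ge0.
rewrite /Lq /=.
have -> : (B ^+ 2 = B ^+ 2 * (I1 ^+ 2 + I2 ^+ 2 + I3 ^+ 2)) by rewrite HN mulr1.
have -> : (D ^+ 2 = D ^+ 2 * (I1 ^+ 2 + I2 ^+ 2 + I3 ^+ 2)) by rewrite HN mulr1.
ring.
Qed.

Definition cp (m : nat) (u v : nat -> R) : {poly C} := \poly_(j < m) (u j +i* v j).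

Lemma sum_cplx (I : Type) (r : seq I) (a b : I -> R) :
  \sum_(i <- r) (a i +i* b i) = (\sum_(i <- r) a i) +i* (\sum_(i <- r) b i).
Proof.
elim: r => [|x r IH]; first by rewrite !big_nil.
by rewrite !big_cons IH addcE.
Qed.

Lemma cp_eval m u v (x Y y2 : R) : Y ^+ 2 = y2 ->
  (cp m u v).[x +i* Y] =
  (sA x y2 u m - Y * sC x y2 v m) +i* (sA x y2 v m + Y * sC x y2 u m).
Proof.
move=> HY; rewrite /cp horner_poly.
under eq_bigr do rewrite (cpow_sc _ _ HY) mulcE.
rewrite sum_cplx /sA /sC !mulr_sumr -!sumrB -!big_split /=.
by congr Complex; apply: eq_bigr => j _; ring.
Qed.

Lemma cp_norm2 m u v (x Y y2 : R) : Y ^+ 2 = y2 ->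
  nC (cp m u v).[x +i* Y] ^+ 2 =
  sA x y2 u m ^+ 2 + sA x y2 v m ^+ 2 + y2 * (sC x y2 u m ^+ 2 + sC x y2 v m ^+ 2)
  + 2 * Y * (sA x y2 v m * sC x y2 u m - sA x y2 u m * sC x y2 v m).
Proof. by move=> HY; rewrite (cp_eval _ _ _ _ HY) nC2 -HY; ring. Qed.


Lemma qnorm_ge0 (q : quat R) : 0 <= qnorm q.
Proof. exact: sqrtr_ge0. Qed.

Lemma sqr_le (a b : R) : 0 <= a -> 0 <= b -> a ^+ 2 <= b ^+ 2 -> a <= b.
Proof. by move=> a0 b0; rewrite ler_sqr. Qed.

Lemma link_gen (I1 I2 I3 : R) (u v : nat -> R) m (q : quat R) :
  I1 ^+ 2 + I2 ^+ 2 + I3 ^+ 2 = 1 ->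
  exists z : C, nC z = qnorm q /\
    qnorm (qsum m (fun j => qmul (qpow q j) (sliceC (Quat 0 I1 I2 I3) (u j) (v j))))
      <= nC (cp m u v).[z].
Proof.
move=> HN; case: q => x q1 q2 q3; rewrite Qsum_E.
set y2 := q1 ^+ 2 + q2 ^+ 2 + q3 ^+ 2.
have y20 : 0 <= y2 by rewrite /y2 !addr_ge0 ?sqr_ge0.
set Y := Num.sqrt y2.
have HY : Y ^+ 2 = y2 by rewrite sqr_sqrtr.
have Y0 : 0 <= Y by exact: sqrtr_ge0.
set d := q1 * I1 + q2 * I2 + q3 * I3.
have d2 : d ^+ 2 <= Y ^+ 2.
  rewrite HY; have E : y2 - d ^+ 2 = (q2 * I3 - q3 * I2) ^+ 2 + (q3 * I1 - q1 * I3) ^+ 2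
        + (q1 * I2 - q2 * I1) ^+ 2.
    by rewrite /d -[y2 in LHS]mulr1 -HN /y2; ring.
  have : 0 <= y2 - d ^+ 2 by rewrite E !addr_ge0 ?sqr_ge0.
  lra.
set A := sA x y2 u m; set B := sA x y2 v m; set Cc := sC x y2 u m; set D := sC x y2 v m.
have HY' : (if 0 <= B * Cc - A * D then Y else - Y) ^+ 2 = y2.
  by case: ifP => _; rewrite ?sqrrN HY.
exists (x +i* (if 0 <= B * Cc - A * D then Y else - Y)); split.
  rewrite nCE HY' /qnorm /=; congr Num.sqrt; rewrite /y2; ring.
apply: sqr_le; rewrite ?qnorm_ge0 ?nC_ge0 //.
rewrite (cp_norm2 _ _ _ _ HY') Lq_norm2 // -/y2 -/d -/A -/B -/Cc -/D.
suff : d * (B * Cc - A * D) <= (if 0 <= B * Cc - A * D then Y else - Y) * (B * Cc - A * D).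
  lra.
case: ifP => hF.
  have : d <= Y by nra.
  nra.
have : - Y <= d by nra.
move/negbT: hF; rewrite -ltNge => hF.
nra.
Qed.

Lemma sliceC_E (I1 I2 I3 x y : R) :
  sliceC (Quat 0 I1 I2 I3) x y = Quat x (I1 * y) (I2 * y) (I3 * y).
Proof. by rewrite /sliceC /qadd /qmul /qreal /=; congr Quat; ring. Qed.

Lemma link_slice (I1 I2 I3 : R) (u v : nat -> R) m (x y : R) :
  I1 ^+ 2 + I2 ^+ 2 + I3 ^+ 2 = 1 ->
  qnorm (sliceC (Quat 0 I1 I2 I3) x y) = nC (x +i* y) /\
  qnorm (qsum m (fun j => qmul (qpow (sliceC (Quat 0 I1 I2 I3) x y) j)
            (sliceC (Quat 0 I1 I2 I3) (u j) (v j))))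
      = nC (cp m u v).[x +i* y].
Proof.
move=> HN; have Hy2 : (I1 * y) ^+ 2 + (I2 * y) ^+ 2 + (I3 * y) ^+ 2 = y ^+ 2.
  by rewrite !exprMn -!mulrDl HN mul1r.
rewrite sliceC_E; split.
  rewrite nCE /qnorm /=; congr Num.sqrt; rewrite -Hy2; ring.
rewrite Qsum_E Hy2; apply/eqP; rewrite -(eqrXn2 (ltn0Sn 1)) ?qnorm_ge0 ?nC_ge0 //.
rewrite (cp_norm2 _ _ _ _ (erefl (y ^+ 2))) Lq_norm2 //; apply/eqP.
have -> : I1 * y * I1 + I2 * y * I2 + I3 * y * I3 = y.
  by rewrite -[y in RHS]mul1r -HN; ring.
by rewrite Hy2.
Qed.


Lemma poly_vanish (m : nat) (c : nat -> R) :
  (forall x : R, \sum_(j <- iota 0 m) c j * x ^+ j = 0) -> forall j, (j < m)%N -> c j = 0.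
Proof.
move=> H j jm.
pose p : {poly R} := \poly_(j < m) c j.
have p0 : p = 0.
  apply/eqP; apply/negPn/negP => pn0.
  have := max_poly_roots pn0 (rs := [seq i%:R | i <- iota 0 m]).
  rewrite size_map size_iota map_inj_uniq ?iota_uniq; last first.
    by move=> a b /eqP; rewrite eqr_nat => /eqP.
  have -> : all (root p) [seq i%:R | i <- iota 0 m].
    apply/allP => r _; rewrite /root /p horner_poly; apply/eqP.
    by transitivity (\sum_(j <- iota 0 m) c j * r ^+ j); [symmetry; exact: iota_sum | exact: H].
  move=> /(_ isT isT); rewrite ltnNge; by rewrite size_poly.
by have := coef_poly m c j; rewrite -/p p0 coef0 jm => <-.
Qed.

Lemma qsum_ext m (F G : nat -> quat R) :
  (forall j, (j < m)%N -> F j = G j) -> qsum m F = qsum m G.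
Proof.
move=> H; rewrite /qsum.
have : forall j, j \in iota 0 m -> F j = G j by move=> j; rewrite mem_iota => /H.
elim: (iota 0 m) => [|j r IH] //= Hr.
by rewrite Hr ?mem_head // IH // => k kr; apply: Hr; rewrite in_cons kr orbT.
Qed.

Lemma qsum_comp m (F : nat -> quat R) :
  [/\ qre (qsum m F) = \sum_(j <- iota 0 m) qre (F j), qi (qsum m F) = \sum_(j <- iota 0 m) qi (F j),
      qj (qsum m F) = \sum_(j <- iota 0 m) qj (F j) & qk (qsum m F) = \sum_(j <- iota 0 m) qk (F j)].
Proof.
rewrite /qsum; elim: (iota 0 m) => [|j r [IH1 IH2 IH3 IH4]] /=.
  by rewrite !big_nil.
by rewrite !big_cons IH1 IH2 IH3 IH4.
Qed.

Lemma qpow_real (x : R) j : qpow (Quat x 0 0 0) j = Quat (x ^+ j) 0 0 0.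
Proof.
elim: j => [|j IH] //=; rewrite IH /qmul /=; congr Quat; rewrite ?exprSr; ring.
Qed.

Lemma coef_in_slice (n : nat) (a : nat -> quat R) (I1 I2 I3 : R) :
  I1 ^+ 2 + I2 ^+ 2 + I3 ^+ 2 = 1 ->
  (forall x y : R, exists u v : R,
     spoly n a (sliceC (Quat 0 I1 I2 I3) x y) = sliceC (Quat 0 I1 I2 I3) u v) ->
  forall j, (j <= n)%N ->
  a j = sliceC (Quat 0 I1 I2 I3) (qre (a j))
          (qi (a j) * I1 + qj (a j) * I2 + qk (a j) * I3).
Proof.
move=> HN H j jn.
have cr : forall x : R,
   [/\ \sum_(j <- iota 0 n.+1) (qi (a j) * I2 - qj (a j) * I1) * x ^+ j = 0,
       \sum_(j <- iota 0 n.+1) (qj (a j) * I3 - qk (a j) * I2) * x ^+ j = 0 &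
       \sum_(j <- iota 0 n.+1) (qi (a j) * I3 - qk (a j) * I1) * x ^+ j = 0].
  move=> x; have [u [v E]] := H x 0.
  move: E; rewrite sliceC_E sliceC_E !mulr0 /spoly.
  have [_ e1 e2 e3] := qsum_comp n.+1 (fun j => qmul (qpow (Quat x 0 0 0) j) (a j)).
  move=> E; move: e1 e2 e3; rewrite E => e1 e2 e3.
  have t : forall (f g : nat -> R) (c1 c2 : R), \sum_(j <- iota 0 n.+1) (f j * c1 - g j * c2) * x ^+ j
      = c1 * \sum_(j <- iota 0 n.+1) (x ^+ j * f j) - c2 * \sum_(j <- iota 0 n.+1) (x ^+ j * g j).
    move=> f g c1 c2; rewrite !mulr_sumr -sumrB; apply: eq_bigr => k _; ring.
  have q1 : forall k, qi (qmul (qpow (Quat x 0 0 0) k) (a k)) = x ^+ k * qi (a k).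
    by move=> k; rewrite qpow_real /qmul /=; ring.
  have q2 : forall k, qj (qmul (qpow (Quat x 0 0 0) k) (a k)) = x ^+ k * qj (a k).
    by move=> k; rewrite qpow_real /qmul /=; ring.
  have q3 : forall k, qk (qmul (qpow (Quat x 0 0 0) k) (a k)) = x ^+ k * qk (a k).
    by move=> k; rewrite qpow_real /qmul /=; ring.
  rewrite (eq_bigr _ (fun k _ => q1 k)) in e1.
  rewrite (eq_bigr _ (fun k _ => q2 k)) in e2.
  rewrite (eq_bigr _ (fun k _ => q3 k)) in e3.
  rewrite !t -e1 -e2 -e3 /=; split; ring.
have h1 := poly_vanish (fun x => let: And3 h _ _ := cr x in h) jn.
have h2 := poly_vanish (fun x => let: And3 _ h _ := cr x in h) jn.
have h3 := poly_vanish (fun x => let: And3 _ _ h := cr x in h) jn.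
move: h1 h2 h3 => /= h1 h2 h3.
rewrite sliceC_E; case: (a j) h1 h2 h3 => b0 b1 b2 b3 /= h1 h2 h3.
have E1 : b1 = b1 * (I1 ^+ 2 + I2 ^+ 2 + I3 ^+ 2) by rewrite HN mulr1.
have E2 : b2 = b2 * (I1 ^+ 2 + I2 ^+ 2 + I3 ^+ 2) by rewrite HN mulr1.
have E3 : b3 = b3 * (I1 ^+ 2 + I2 ^+ 2 + I3 ^+ 2) by rewrite HN mulr1.
congr Quat.
- rewrite {1}E1; apply/eqP; rewrite -subr_eq0; apply/eqP.
  transitivity (I2 * (b1 * I2 - b2 * I1) + I3 * (b1 * I3 - b3 * I1)); first ring.
  by rewrite h1 h3; ring.
- rewrite {1}E2; apply/eqP; rewrite -subr_eq0; apply/eqP.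
  transitivity (- I1 * (b1 * I2 - b2 * I1) + I3 * (b2 * I3 - b3 * I2)); first ring.
  by rewrite h1 h2; ring.
- rewrite {1}E3; apply/eqP; rewrite -subr_eq0; apply/eqP.
  transitivity (- I1 * (b1 * I3 - b3 * I1) - I2 * (b2 * I3 - b3 * I2)); first ring.
  by rewrite h2 h3; ring.
Qed.

End Q.

Section F.
Variable R : realType.
Local Notation C := (R[i]).

Lemma qnorm_eq0 (w : quat R) : qnorm w = 0 -> w = qzero R.
Proof.
case: w => a b c d; rewrite /qnorm /= => /eqP; rewrite sqrtr_eq0 => h.
have ha := sqr_ge0 a; have hb := sqr_ge0 b; have hc := sqr_ge0 c; have hd := sqr_ge0 d.
have a0 : a ^+ 2 = 0 by lra.
have b0 : b ^+ 2 = 0 by lra.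
have c0 : c ^+ 2 = 0 by lra.
have d0 : d ^+ 2 = 0 by lra.
move: a0 b0 c0 d0 => /eqP; rewrite sqrf_eq0 => /eqP -> /eqP; rewrite sqrf_eq0 => /eqP ->.
by move=> /eqP; rewrite sqrf_eq0 => /eqP -> /eqP; rewrite sqrf_eq0 => /eqP ->.
Qed.

Lemma cp_deriv m (u v : nat -> R) :
  (cp m.+1 u v)^`() = cp m (fun j => (j.+1)%:R * u j.+1) (fun j => (j.+1)%:R * v j.+1).
Proof.
apply/polyP => j; rewrite coef_deriv /cp !coef_poly ltnS.
case: ifP => _; last by rewrite mul0rn.
rewrite -[LHS]mulr_natl natCE mulcE; congr Complex; ring.
Qed.

End F.

Theorem proposition2p2 (R : realType) (n : nat) (a : nat -> quat R)
  (I : quat R) :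
  a n <> qzero R ->
  in_sphereS I ->
  (forall x y : R, x ^+ 2 + y ^+ 2 < 1 -> spoly n a (sliceC I x y) <> qzero R) ->
  (forall x y : R, exists u v : R, spoly n a (sliceC I x y) = sliceC I u v) ->
  qsupnorm (spoly_deriv n a) <= n%:R / 2 * qsupnorm (spoly n a).
Proof.
move=> an0 HI Hz Hs.
have [I0 HN] := sphere_I HI.
move: I I0 HI Hz Hs HN => [i0 I1 I2 I3] /= -> _ Hz Hs HN.
set I := Quat 0 I1 I2 I3.
pose u j := qre (a j).
pose v j := qi (a j) * I1 + qj (a j) * I2 + qk (a j) * I3.
have Ha := coef_in_slice HN Hs.
pose u' j := (j.+1)%:R * u j.+1.
pose v' j := (j.+1)%:R * v j.+1.
have EP : forall q, spoly n a q = qsum n.+1 (fun j => qmul (qpow q j) (sliceC I (u j) (v j))).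
  by move=> q; apply: qsum_ext => j jn; rewrite Ha.
have EP' : forall q, spoly_deriv n a q = qsum n (fun j => qmul (qpow q j) (sliceC I (u' j) (v' j))).
  move=> q; apply: qsum_ext => j jn; rewrite Ha //.
  congr qmul; rewrite /I !sliceC_E /qmul /qreal /u' /v' /u /v /=; congr Quat; ring.
pose p : {poly R[i]} := cp n.+1 u v.
have sp : size p = n.+1.
  rewrite size_poly_eq //=; apply/eqP => E; apply: an0.
  move: E => /eqP; rewrite eq_complex /= => /andP[/eqP u0 /eqP v0].
  by rewrite Ha // -/(u n) -/(v n) u0 v0 sliceC_E /qzero /qreal !mulr0.
pose SP := [set qnorm (spoly n a q) | q in [set q : quat R | qnorm q <= 1]].
have hasSP : has_sup SP.
  split; first by exists (qnorm (spoly n a (qzero R))); exists (qzero R) => //=;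
    rewrite /qnorm /= expr0n /= !addr0 sqrtr0 ler01.
  exists (\sum_(i < size p) nC p`_i) => _ [q /= q1 <-].
  have [z [nz hz]] := link_gen u v n.+1 q HN.
  rewrite EP; apply: le_trans hz _; apply: poly_bound; by rewrite nz.
have HM : forall z, nC z <= 1 -> nC p.[z] <= qsupnorm (spoly n a).
  move=> [x y] z1; have [e1 e2] := link_slice u v n.+1 x y HN.
  rewrite -e2 -EP; apply: sup_upper_bound => //; exists (sliceC I x y) => //=.
  by rewrite e1.
have HZ : forall z, nC z < 1 -> p.[z] != 0.
  move=> [x y] z1; apply/negP => /eqP pz.
  have [e1 e2] := link_slice u v n.+1 x y HN.
  apply: (Hz x y).
    move: z1; rewrite nCE => z1.
    have h0 : 0 <= x ^+ 2 + y ^+ 2 by rewrite addr_ge0 ?sqr_ge0.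
    have := sqr_sqrtr h0; have := sqrtr_ge0 (x ^+ 2 + y ^+ 2); nra.
  by apply: qnorm_eq0; rewrite EP e2 -/p pz nC0.
have Lx := lax sp HZ HM.
apply: ge_sup.
  by exists (qnorm (spoly_deriv n a (qzero R))); exists (qzero R) => //=;
    rewrite /qnorm /= expr0n /= !addr0 sqrtr0 ler01.
move=> _ [q /= q1 <-].
have [z [nz hz]] := link_gen u' v' n q HN.
rewrite EP'; apply: le_trans hz _.
rewrite -cp_deriv; apply: Lx; by rewrite nz.
Qed.
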